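(* Let $G$ be a finite group and $n$ a positive divisor of $|G|$. Then $G$ has at least $d(n)$ cyclic subgroups whose order divides $n$. Moreover the following are equivalent: (1) for every positive divisor $m$ of $n$, $G$ has exactly $m$ elements $x$ with $x^m=1$; (2) $G$ has exactly $d(n)$ cyclic subgroups whose order divides $n$; (3) the subgroup of $G$ generated by all cyclic subgroups of $G$ of order dividing $n$ is cyclic of order $n$.
   Context: $d(n)$ denotes the number of positive divisors of $n$. *)

(* Defs.v *)
From mathcomp Require Import all_boot all_fingroup all_solvable.
Set Implicit Arguments. Unset Strict Implicit. Unset Printing Implicit Defensive.
Local Open Scope group_scope.

Definition ndivisors (n : nat) : nat := size (divisors n).

Definition cyc_subgroups_dvd (gT : finGroupType) (G : {set gT}) (n : nat)
  : {set {set gT}} :=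
  [set H : {set gT} | [&& group_set H, H \subset G, cyclic H & #|H| %| n]].

(* Main.v *)
Require Import Defs.
From mathcomp Require Import all_boot all_order all_algebra all_fingroup all_solvable.
From mathcomp Require Import ring lra zify.
Set Implicit Arguments. Unset Strict Implicit. Unset Printing Implicit Defensive.

Local Open Scope group_scope.
Section Grp.
Variables (gT : finGroupType) (G : {group gT}).

Definition Eo k := [set x in G | #[x] == k].
Definition Cy k := [set <[x]> | x in G & #[x] == k].

Lemma card_Eo k : #|Eo k| = (#|Cy k| * totient k)%N.
Proof.
rewrite -sum1_card (partition_big_imset cycle) /= -sum_nat_const.
apply: eq_bigr => C /imsetP[x /setIdP[Gx /eqP <-] ->].
rewrite sum1dep_card totient_gen; apply: eq_card => y; rewrite !inE /generator.
move: Gx; rewrite andbC eq_sym -!cycle_subG /order.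
by case: eqP => // -> ->; rewrite eqxx.
Qed.

Lemma card_setE (T : finType) (A : {set T}) (P : pred T) :
  #|[set x in A | P x]| = \sum_(x in A) (P x : nat).
Proof.
rewrite -sum1_card big_mkcond [RHS]big_mkcond; apply: eq_bigr => x _.
by rewrite inE; case: (x \in A); case: (P x).
Qed.

Lemma mem_sum (T : eqType) (s : seq T) a : uniq s ->
  ((a \in s) : nat) = \sum_(k <- s) ((a == k) : nat).
Proof.
elim: s => [|x s IH]; first by rewrite big_nil.
rewrite big_cons in_cons /= => /andP[xs us]; rewrite -IH //.
by case: eqP => [->|]; rewrite ?(negbTE xs).
Qed.

Lemma card_X m : (0 < m)%N ->
  #|[set x in G | x ^+ m == 1]| = \sum_(k <- divisors m) #|Eo k|.
Proof.
move=> m0; rewrite card_setE.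
rewrite (eq_bigr (fun x => \sum_(k <- divisors m) ((#[x] == k) : nat))); last first.
  by move=> x _; rewrite -order_dvdn dvdn_divisors // mem_sum // divisors_uniq.
rewrite exchange_big /=; apply: eq_bigr => k _; by rewrite card_setE.
Qed.

Lemma mem_Cy n k H : (k %| n)%N ->
  (H \in Cy k) = (H \in cyc_subgroups_dvd G n) && (#|H| == k).
Proof.
move=> kn; apply/imsetP/idP => [[x /setIdP[Gx /eqP ox] ->]|].
  rewrite inE groupP /= cycle_subG Gx cycle_cyclic /= -/(#[x]) ox kn eqxx //.
rewrite inE => /andP[/and4P[_ HG /cyclicP[x Hx] _] /eqP ox]; subst H.
by exists x => //; rewrite inE -cycle_subG HG /= /order ox.
Qed.

Lemma card_C n : (0 < n)%N ->
  #|cyc_subgroups_dvd G n| = \sum_(k <- divisors n) #|Cy k|.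
Proof.
move=> n0; have cardI : forall (T : finType) (A : {set T}), #|A| = \sum_x ((x \in A) : nat).
  by move=> T A; rewrite -sum1_card big_mkcond.
rewrite cardI.
rewrite (eq_bigr (fun H => \sum_(k <- divisors n)
            (((H \in cyc_subgroups_dvd G n) && (#|H| == k)) : nat))); last first.
  move=> H _; case HC: (H \in cyc_subgroups_dvd G n); last first.
    by rewrite big1_seq.
  have : (#|H| %| n)%N by move: HC; rewrite inE => /and4P[].
  by rewrite dvdn_divisors // => h; rewrite /= -mem_sum ?divisors_uniq // h.
rewrite exchange_big /= big_seq [RHS]big_seq; apply: eq_bigr => k.
rewrite -dvdn_divisors // => kn; rewrite cardI; apply: eq_bigr => H _.
by rewrite (mem_Cy _ kn).
Qed.

End Grp.
Local Close Scope group_scope.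

Lemma ds_perm p i s : prime p -> 0 < s -> ~~ (p %| s) ->
  perm_eq (divisors (p ^ i * s)) [seq p ^ j * t | j <- iota 0 i.+1, t <- divisors s].
Proof.
move=> pp s0 nps; have p0 := prime_gt0 pp.
have n0 : 0 < p ^ i * s by rewrite muln_gt0 expn_gt0 p0.
have cops : forall j, coprime (p ^ j) s.
  by move=> j; apply: coprimeXl; rewrite prime_coprime.
have ndiv : forall t, t \in divisors s -> ~~ (p %| t) /\ 0 < t.
  move=> t; rewrite -dvdn_divisors // => ts; split.
    by apply: contra nps => /dvdn_trans; apply.
  by apply: dvdn_gt0 ts.
have logt : forall j t, t \in divisors s -> logn p (p ^ j * t) = j.
  move=> j t /ndiv[nt t0]; rewrite lognM ?expn_gt0 ?p0 // pfactorK //.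
  by rewrite logn_coprime ?addn0 // prime_coprime.
apply: uniq_perm; first exact: divisors_uniq.
  apply: allpairs_uniq; [exact: iota_uniq | exact: divisors_uniq|].
  move=> [j t] [j' t'] /allpairsP[[a b] [ha hb [-> ->]]].
  move=> /allpairsP[[a' b'] [ha' hb' [-> ->]]] /= E.
  have ea : a = a' by rewrite -(logt a b hb) E logt.
  subst a'; congr (_, _); apply/eqP; rewrite -(@eqn_pmul2l (p ^ a)) ?expn_gt0 ?p0 //.
  by apply/eqP.
move=> k; rewrite -dvdn_divisors //; apply/idP/allpairsP.
  move=> kd; have k0 : 0 < k by apply: dvdn_gt0 kd.
  exists (logn p k, k`_p^'); split.
  - by rewrite mem_iota add0n ltnS -(logt i s) ?divisors_id // dvdn_leq_log.
  - have co : coprime k`_p^' (p ^ i).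
      rewrite coprime_sym; apply: (@pnat_coprime p); first by rewrite pnatX pnat_id.
      exact: part_pnat.
    rewrite -dvdn_divisors // -(Gauss_dvdr _ co).
    exact: dvdn_trans (dvdn_part _ _) kd.
  by rewrite -p_part partnC.
move=> [[j t] [hj ht ->]]; rewrite mem_iota add0n ltnS in hj.
by apply: dvdn_mul; [apply: dvdn_exp2l | rewrite dvdn_divisors].
Qed.

Lemma ds_size p i s : prime p -> 0 < s -> ~~ (p %| s) ->
  size (divisors (p ^ i * s)) = i.+1 * size (divisors s).
Proof.
by move=> pp s0 nps; rewrite (perm_size (ds_perm i pp s0 nps)) size_allpairs size_iota.
Qed.

Lemma tot_pS p j : prime p -> totient (p ^ j.+1) = p.-1 * p ^ j.
Proof. by move=> pp; rewrite totient_pfactor. Qed.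

Lemma tot_lt p j : prime p -> (0 < j) || (2 < p) -> totient (p ^ j) < totient (p ^ j.+1).
Proof.
move=> pp; have p2 := prime_gt1 pp; case: j => [|j] /=.
  by rewrite expn0 tot_pS // expn0 muln1 (_ : totient 1 = 1) // => h; lia.
rewrite !tot_pS // expnS => _; rewrite ltn_pmul2l; last by lia.
by apply: ltn_Pmull => //; rewrite expn_gt0; lia.
Qed.

Lemma tot_le p j : prime p -> totient (p ^ j) <= totient (p ^ j.+1).
Proof.
move=> pp; have p2 := prime_gt1 pp; case: j => [|j].
  by rewrite expn0 tot_pS // expn0 muln1 (_ : totient 1 = 1) //; lia.
by apply: ltnW; apply: tot_lt.
Qed.

Import Order.TTheory GRing.Theory Num.Theory.
Section Numeric.
Local Open Scope ring_scope.

Lemma ds_sum (F : nat -> rat) p i s : prime p -> (0 < s)%N -> ~~ (p %| s)%N ->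
  \sum_(k <- divisors (p ^ i * s)%N) F k = \sum_(j < i.+1) \sum_(t <- divisors s) F (p ^ j * t)%N.
Proof.
move=> pp s0 nps; rewrite (perm_big _ (ds_perm i pp s0 nps)) big_allpairs_dep.
rewrite -(big_mkord xpredT (fun j => \sum_(t <- divisors s) F (p ^ j * t)%N)).
by rewrite /index_iota subn0.
Qed.

Lemma abel0 p (S' : nat -> rat) (c D : rat) (E : nat) : prime p ->
  \sum_(j < E.+1) S' j / (totient (p ^ j))%:R =
  c * D * E.+1%:R + (\sum_(i < E.+1) S' i - c * (p ^ E)%:R * D) / (totient (p ^ E))%:R
  + \sum_(j < E) ((totient (p ^ j))%:R^-1 - (totient (p ^ j.+1))%:R^-1)
                  * (\sum_(i < j.+1) S' i - c * (p ^ j)%:R * D).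
Proof.
move=> pp; have p1 := prime_gt1 pp.
elim: E => [|E IH].
  rewrite !big_ord1 big_ord0 expn0 (_ : totient 1 = 1) // mulr1n !divr1; ring.
rewrite big_ord_recr IH [in RHS]big_ord_recr [X in _ = _ + X]big_ord_recr /=.
set A := \sum_(i < E.+1) S' i.
set B := \sum_(j < E) _.
rewrite tot_pS // expnS.
have ph0 : (totient (p ^ E))%:R != 0 :> rat.
  by rewrite pnatr_eq0 -lt0n totient_gt0 expn_gt0; lia.
have hp : (p.-1)%:R != 0 :> rat by rewrite pnatr_eq0; lia.
have hpE : (p ^ E)%:R != 0 :> rat by rewrite pnatr_eq0 -lt0n expn_gt0; lia.
have hpp : p%:R = (p.-1)%:R + 1 :> rat.
  by rewrite -[in LHS](prednK (ltnW p1)) -natr1.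
rewrite !natrM hpp -[E.+2%:R]natr1; field.
by rewrite hp hpE.
Qed.

Lemma abel p (S' S : nat -> rat) (c D : rat) (E : nat) : prime p ->
  (forall j, S j = \sum_(i < j.+1) S' i) ->
  \sum_(j < E.+1) S' j / (totient (p ^ j))%:R =
  c * D * E.+1%:R + (S E - c * (p ^ E)%:R * D) / (totient (p ^ E))%:R
  + \sum_(j < E) ((totient (p ^ j))%:R^-1 - (totient (p ^ j.+1))%:R^-1)
                  * (S j - c * (p ^ j)%:R * D).
Proof.
move=> pp SE; rewrite (abel0 _ c D E pp) SE; congr (_ + _).
by apply: eq_bigr => j _; rewrite SE.
Qed.

Lemma NL n : (0 < n)%N -> forall (g : nat -> rat) (c : rat),
  (forall m, (m %| n)%N -> c * m%:R <= \sum_(k <- divisors m) g k) ->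
  c * (size (divisors n))%:R <= \sum_(k <- divisors n) g k / (totient k)%:R /\
  (\sum_(k <- divisors n) g k / (totient k)%:R = c * (size (divisors n))%:R ->
   forall m, (m %| n)%N -> odd n || ~~ odd m -> \sum_(k <- divisors m) g k = c * m%:R).
Proof.
elim/ltn_ind: n => n IHn n0 g c hyp.
have [n1|n1] := leqP n 1.
  have En : n = 1%N by lia.
  subst n; have h1 := hyp 1%N (dvd1n _).
  rewrite (_ : divisors 1 = [:: 1%N]) // in h1 *.
  rewrite !big_seq1 (_ : totient 1 = 1%N) // in h1 *.
  rewrite /= mulr1n divr1 mulr1 in h1 *.
  split=> //; move=> heq m; rewrite dvdn1 => /eqP -> _.
  by rewrite (_ : divisors 1 = [:: 1%N]) // big_seq1 heq mulr1.
pose p := if odd n then pdiv n else 2%N.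
have pp : prime p by rewrite /p; case: ifP => _ //; apply: pdiv_prime.
have pn : (p %| n)%N by rewrite /p; case: ifP => h; [apply: pdiv_dvd | rewrite dvdn2 h].
have p2n : p = 2%N -> ~~ odd n.
  rewrite /p; case: ifP => // on E; move: (pdiv_dvd n); rewrite E dvdn2 on //.
have p1 := prime_gt1 pp.
set e := logn p n; set r := (n`_p^')%N.
have e0 : (0 < e)%N by rewrite logn_gt0 mem_primes pp n0 pn.
have r0 : (0 < r)%N := part_gt0 _ _.
have npr : ~~ (p %| r)%N by rewrite -p'natE // part_pnat.
have nE : n = (p ^ e * r)%N by rewrite -p_part partnC.
have rn : (r < n)%N.
  have : (p <= p ^ e)%N by rewrite -{1}(expn1 p) leq_pexp2l // prime_gt0.
  by move=> h; rewrite [X in (_ < X)%N]nE; apply: ltn_Pmull => //; lia.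
have rodd : odd r.
  case on: (odd n).
    apply/negPn/negP; rewrite -dvdn2 => /dvdn_trans /(_ (dvdn_part _ _)).
    by rewrite dvdn2 on.
  by move: npr; rewrite /p on dvdn2 negbK.
pose phi j := (totient j)%:R : rat.
pose Sp j := \sum_(t <- divisors r) g (p ^ j * t)%N / phi t.
pose Gj j t := \sum_(i < j.+1) g (p ^ i * t)%N.
pose S j := \sum_(t <- divisors r) Gj j t / phi t.
pose D := (size (divisors r))%:R : rat.
have SE : forall j, S j = \sum_(i < j.+1) Sp i.
  move=> j; rewrite /S /Sp exchange_big /=; apply: eq_bigr => t _.
  by rewrite mulr_suml.
have divr_np : forall t, (t %| r)%N -> ~~ (p %| t)%N.
  by move=> t tr; apply: contra npr => /dvdn_trans; apply.
have tot : \sum_(k <- divisors n) g k / phi k = \sum_(j < e.+1) Sp j / phi (p ^ j)%N.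
  rewrite {1}nE ds_sum //; apply: eq_bigr => j _; rewrite /Sp mulr_suml.
  rewrite big_seq [RHS]big_seq; apply: eq_bigr => t; rewrite -dvdn_divisors // => tr.
  rewrite /phi totient_coprime ?natrM ?invfM; first by ring.
  by apply: coprimeXl; rewrite prime_coprime // divr_np.
have GjE : forall j s, (0 < s)%N -> ~~ (p %| s)%N ->
    \sum_(t <- divisors s) Gj j t = \sum_(k <- divisors (p ^ j * s)%N) g k.
  by move=> j s s0 nps; rewrite ds_sum // exchange_big.
have hypj : forall j, (j <= e)%N -> forall s, (s %| r)%N ->
    c * (p ^ j)%:R * s%:R <= \sum_(t <- divisors s) Gj j t.
  move=> j je s sr; have s0 : (0 < s)%N by apply: dvdn_gt0 sr.
  rewrite GjE ?divr_np // -mulrA -natrM; apply: hyp.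
  by rewrite nE; apply: dvdn_mul => //; apply: dvdn_exp2l.
have IHj : forall j, (j <= e)%N -> c * (p ^ j)%:R * D <= S j /\
   (S j = c * (p ^ j)%:R * D -> forall s, (s %| r)%N ->
      \sum_(t <- divisors s) Gj j t = c * (p ^ j)%:R * s%:R).
  move=> j je; have [h1 h2] := IHn r rn r0 (Gj j) (c * (p ^ j)%:R) (hypj j je).
  by split => // /h2 h s sr; apply: h => //; rewrite rodd.
have ab := abel c D e pp SE.
set T1 := (S e - _) / _ in ab.
set T2 := \sum_(j < e) _ in ab.
have T1ge : 0 <= T1.
  apply: divr_ge0; last exact: ler0n.
  by rewrite subr_ge0; case: (IHj e (leqnn e)).
have alpha_ge : forall j : nat, 0 <= (totient (p ^ j))%:R^-1 - (totient (p ^ j.+1))%:R^-1 :> rat.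
  move=> j; rewrite subr_ge0 lef_pV2 ?ler_nat ?tot_le //.
    by rewrite qualifE /= ltr0n totient_gt0 expn_gt0 prime_gt0.
  by rewrite qualifE /= ltr0n totient_gt0 expn_gt0 prime_gt0.
have T2ge : 0 <= T2.
  apply: sumr_ge0 => j _; apply: mulr_ge0 => //.
  by rewrite subr_ge0; case: (IHj j (ltnW (ltn_ord j))).
have sizen : (size (divisors n))%:R = D * e.+1%:R :> rat.
  by rewrite {1}nE ds_size // natrM mulrC.
rewrite tot ab sizen mulrA.
split; first by rewrite -addrA lerDl addr_ge0.
move=> heq.
have T1z : T1 = 0 by lra.
have T2z : T2 = 0 by lra.
have Seq : forall j, (j <= e)%N -> (0 < j)%N || (2 < p)%N || (j == e) ->
    S j = c * (p ^ j)%:R * D.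
  move=> j je; have [-> _|nje] := eqVneq j e.
    move/eqP: T1z; rewrite /T1 mulf_eq0 invr_eq0 pnatr_eq0 eqn0Ngt totient_gt0.
    by rewrite expn_gt0 prime_gt0 // orbF subr_eq0 => /eqP.
  rewrite orbF => cond; have jlt : (j < e)%N by rewrite ltn_neqAle nje.
  have T2nn : forall i : 'I_e, true -> 0 <= ((totient (p ^ i))%:R^-1 - (totient (p ^ i.+1))%:R^-1)
                  * (S i - c * (p ^ i)%:R * D).
    move=> i _; apply: mulr_ge0 => //.
    by rewrite subr_ge0; case: (IHj i (ltnW (ltn_ord i))).
  have := psumr_eq0P T2nn T2z (i := Ordinal jlt) isT; rewrite /=.
  have apos : 0 < (totient (p ^ j))%:R^-1 - (totient (p ^ j.+1))%:R^-1 :> rat.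
    rewrite subr_gt0 ltf_pV2 ?ltr_nat ?tot_lt //.
      by rewrite qualifE /= ltr0n totient_gt0 expn_gt0 prime_gt0.
    by rewrite qualifE /= ltr0n totient_gt0 expn_gt0 prime_gt0.
  by move/eqP; rewrite mulf_eq0 (gt_eqF apos) /= subr_eq0 => /eqP.
move=> m mn hm.
have m0 : (0 < m)%N by apply: dvdn_gt0 mn.
have mE : m = (p ^ logn p m * m`_p^')%N by rewrite -p_part partnC.
set j := logn p m in mE; set s := (m`_p^')%N in mE.
have je : (j <= e)%N by apply: dvdn_leq_log.
have sr : (s %| r)%N by apply: partn_dvd.
have s0 : (0 < s)%N := part_gt0 _ _.
have nps : ~~ (p %| s)%N by rewrite -p'natE // part_pnat.
have cond : (0 < j)%N || (2 < p)%N || (j == e).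
  have [j0|jpos] := posnP j; last by apply/orP; left; apply/orP; left.
  have [p2|pg2] := leqP p 2; last by apply/orP; left; apply/orP; right.
  exfalso; have p2' : p = 2%N by lia.
  move: hm (p2n p2'); rewrite mE j0 expn0 mul1n.
  move: nps; rewrite p2' dvdn2 negbK => -> /=.
  by case: (odd n).
have [_ h2] := IHj j je.
by rewrite {1}mE -GjE // (h2 (Seq j je cond) s sr) mE natrM mulrA.
Qed.
End Numeric.

Lemma sum_le1_eq (T : eqType) (s : seq T) (a : T -> nat) :
  (forall k, k \in s -> (a k <= 1)%N) -> \sum_(k <- s) a k = size s ->
  forall k, k \in s -> a k = 1%N.
Proof.
elim: s => [|x s IH] //= hle; rewrite big_cons => hs k.
have hs' : (\sum_(k <- s) a k <= size s)%N.
  rewrite -sum1_size big_seq [X in (_ <= X)%N]big_seq; apply: leq_sum => i iS.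
  by apply: hle; rewrite in_cons iS orbT.
have hx := hle x (mem_head _ _).
rewrite in_cons => /orP[/eqP ->|ks]; first by lia.
apply: IH => // [i iS|]; first by apply: hle; rewrite in_cons iS orbT.
lia.
Qed.

Section Grp2.
Local Open Scope group_scope.
Variables (gT : finGroupType) (G : {group gT}).

Definition Xs m := [set x in G | x ^+ m == 1].

Lemma inXs m y : (y \in Xs m) = (y \in G) && (y ^+ m == 1).
Proof. by rewrite inE. Qed.

Lemma cycX z m : z \in G -> (#[z] %| m)%N -> <[z]> \subset Xs m.
Proof.
move=> Gz zm; apply/subsetP => y /cycleP[i ->]; rewrite inXs groupX //=.
by move: zm; rewrite order_dvdn => /eqP zm; rewrite -expgM mulnC expgM zm expg1n.
Qed.

Lemma CyX k H : H \in Cy G k -> H \subset Xs k /\ #|H| = k.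
Proof.
move=> /imsetP[x /setIdP[Gx /eqP ox] ->]; split => //.
by apply: cycX; rewrite // ox.
Qed.

End Grp2.

Local Open Scope group_scope.

Theorem corollary3p1 (gT : finGroupType) (G : {group gT}) (n : nat)
  (n_gt0 : (0 < n)%N) (n_dvd : (n %| #|G|)%N) :
  (ndivisors n <= #|cyc_subgroups_dvd G n|)%N /\
  [/\ ((forall m : nat, (0 < m)%N -> (m %| n)%N ->
          #|[set x in G | x ^+ m == 1]| = m) <->
       #|cyc_subgroups_dvd G n| = ndivisors n),
      (#|cyc_subgroups_dvd G n| = ndivisors n <->
       (cyclic << \bigcup_(H in cyc_subgroups_dvd G n) H >> /\
        #|<< \bigcup_(H in cyc_subgroups_dvd G n) H >>| = n)) &
      ((forall m : nat, (0 < m)%N -> (m %| n)%N ->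
          #|[set x in G | x ^+ m == 1]| = m) <->
       (cyclic << \bigcup_(H in cyc_subgroups_dvd G n) H >> /\
        #|<< \bigcup_(H in cyc_subgroups_dvd G n) H >>| = n))].
Proof.
set C := cyc_subgroups_dvd G n.
set K := << \bigcup_(H in C) H >>%g.
pose P1 := forall m : nat, (0 < m)%N -> (m %| n)%N -> #|Xs G m| = m.
have Xm0 : forall m, (0 < #|Xs G m|)%N.
  by move=> m; apply/card_gt0P; exists 1%g; rewrite inXs group1 expg1n eqxx.
have frob : forall m, (m %| n)%N -> (m %| #|Xs G m|)%N.
  move=> m mn; rewrite /Xs setIdE; apply: Frobenius_Ldiv; exact: dvdn_trans mn n_dvd.
have Xge : forall m, (m %| n)%N -> (m <= #|Xs G m|)%N.
  by move=> m mn; apply: dvdn_leq (Xm0 m) (frob m mn).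
have hypNL : forall m, (m %| n)%N ->
    (1 * m%:R <= \sum_(k <- divisors m) (#|Eo G k|%:R : rat))%R.
  move=> m mn; have m0 : (0 < m)%N := dvdn_gt0 n_gt0 mn.
  by rewrite mul1r -natr_sum -card_X // ler_nat Xge.
have [ineq eqpart] := @NL n n_gt0 (fun k => (#|Eo G k|%:R : rat)) 1%R hypNL.
have sumE : (\sum_(k <- divisors n) (#|Eo G k|%:R : rat) / (totient k)%:R = #|C|%:R)%R.
  rewrite card_C // natr_sum big_seq [RHS]big_seq; apply: eq_bigr => k.
  rewrite -dvdn_divisors // => kn; have k0 : (0 < k)%N := dvdn_gt0 n_gt0 kn.
  by rewrite card_Eo natrM mulfK // pnatr_eq0 -lt0n totient_gt0.
have part1 : (ndivisors n <= #|C|)%N.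
  by move: ineq; rewrite sumE mul1r ler_nat.
have P1Cy : P1 -> forall k, (k %| n)%N -> (#|Cy G k| <= 1)%N.
  move=> h1 k kn; rewrite -(cards1 (Xs G k)); apply: subset_leq_card.
  apply/subsetP => H HC; have [HX cH] := CyX HC.
  by rewrite inE eqEcard HX /= cH h1 //; exact: dvdn_gt0 n_gt0 kn.
have P1P2 : P1 -> #|C| = ndivisors n.
  move=> h1; apply/eqP; rewrite eqn_leq part1 andbT card_C // /ndivisors -sum1_size.
  rewrite big_seq [X in (_ <= X)%N]big_seq; apply: leq_sum => k.
  by rewrite -dvdn_divisors // => kn; apply: P1Cy.
have P1P3 : P1 -> cyclic K /\ #|K| = n.
  move=> h1; have eqC := P1P2 h1.
  have cyn : #|Cy G n| = 1%N.
    apply: (@sum_le1_eq _ (divisors n) (fun k => #|Cy G k|)); last exact: divisors_id.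
      by move=> k; rewrite -dvdn_divisors // => kn; apply: P1Cy.
    by rewrite -card_C.
  have /card_gt0P[H HC] : (0 < #|Cy G n|)%N by rewrite cyn.
  move: (HC) => /imsetP[x /setIdP[Gx /eqP ox] HE].
  have Xx : <[x]>%g = Xs G n.
    apply/eqP; have [HX cH] := CyX HC; rewrite -HE eqEcard HX /= cH h1 //.
  have Ux : \bigcup_(H in C) H = <[x]>%g.
    apply/eqP; rewrite eqEsubset; apply/andP; split.
      apply/bigcupsP => H'; rewrite inE => /and4P[_ HG /cyclicP[z Hz] Hn]; subst H'.
      by rewrite Xx; apply: cycX; rewrite -?cycle_subG.
    by apply: (bigcup_sup <[x]>%g); rewrite inE groupP cycle_subG Gx cycle_cyclic /= -/(#[x]%g) ox dvdnn.
  by rewrite /K Ux (gen_set_id (groupP <[x]>%G)) cycle_cyclic.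
have P3P1 : cyclic K /\ #|K| = n -> P1.
  move=> [cK cardK] m m0 mn.
  have KG : K \subset G by rewrite gen_subG; apply/bigcupsP => H; rewrite inE => /and4P[].
  have XK : Xs G m \subset K.
    apply/subsetP => y; rewrite inXs => /andP[Gy ym]; apply: mem_gen.
    apply/bigcupP; exists <[y]>%g; last exact: cycle_id.
    rewrite inE groupP cycle_subG Gy cycle_cyclic /=; apply: dvdn_trans mn.
    by rewrite order_dvdn.
  move/cyclicP: cK => [a Ka].
  have oa : #[a]%g = n by rewrite /order -Ka.
  have dn : (n %/ m %| #[a]%g)%N by rewrite oa dvdn_div.
  have Xsub : Xs G m \subset <[a ^+ (n %/ m)]>%g.
    apply/subsetP => y Xy; have := subsetP XK y Xy; rewrite Ka => /cycleP[i yi].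
    move: Xy; rewrite inXs yi => /andP[_]; rewrite -expgM -order_dvdn oa.
    rewrite -{1}(divnK mn) dvdn_pmul2r // => /dvdnP[q ->].
    by rewrite mulnC expgM mem_cycle.
  apply/eqP; rewrite eqn_leq Xge // andbT.
  apply: (leq_trans (subset_leq_card Xsub)).
  by rewrite -/(#[a ^+ (n %/ m)]%g) orderXdiv // oa divnA // mulKn.
have P2P1 : #|C| = ndivisors n -> P1.
  move=> h2.
  have heq : (\sum_(k <- divisors n) (#|Eo G k|%:R : rat) / (totient k)%:R
               = 1 * (size (divisors n))%:R)%R.
    by rewrite sumE mul1r h2.
  have hX : forall m, (m %| n)%N -> odd n || ~~ odd m -> #|Xs G m| = m.
    move=> m mn hm; have m0 := dvdn_gt0 n_gt0 mn; have := eqpart heq m mn hm.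
    by rewrite -natr_sum -card_X // mul1r => /eqP; rewrite eqr_nat => /eqP.
  move=> m m0 mn; case hm: (odd n || ~~ odd m); first exact: hX.
  move/negbT/norP: hm => [/negbTE on /negbNE om].
  have m2n : (2 * m %| n)%N by rewrite Gauss_dvd ?coprime2n // dvdn2 on mn.
  have X2m : #|Xs G (2 * m)| = (2 * m)%N.
    by apply: hX; [exact: m2n | rewrite oddM /= orbT].
  have X2 : #|Xs G 2| = 2.
    by apply: hX; [exact: dvdn_trans (dvdn_mulr m (dvdnn 2)) m2n | rewrite orbT].
  have sub : Xs G m \subset Xs G (2 * m).
    apply/subsetP => y; rewrite !inXs => /andP[-> /eqP ym].
    by rewrite /= (mulnC 2 m) expgM ym expg1n; apply: eqxx.
  have := frob m mn; case/dvdnP => q hq.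
  have hle : (#|Xs G m| <= 2 * m)%N by rewrite -X2m; apply: subset_leq_card.
  have hpos := Xm0 m.
  have q12 : q = 1%N \/ q = 2%N by rewrite hq in hle hpos; nia.
  case: q12 => qE; first by rewrite hq qE mul1n.
  exfalso.
  have eqX : Xs G m = Xs G (2 * m) by apply/eqP; rewrite eqEcard sub X2m hq qE mulnC leqnn.
  have : ~~ (Xs G 2 \subset [1]%g) by apply/negP => /subset_leq_card; rewrite X2 cards1.
  case/subsetPn => y X2y ny1.
  have : y \in Xs G m.
    rewrite eqX; move: X2y; rewrite !inXs => /andP[-> /eqP y2].
    by rewrite /= expgM y2 expg1n; apply: eqxx.
  rewrite inXs => /andP[_ ym]; move: X2y; rewrite inXs => /andP[_ y2].
  have : (#[y]%g %| gcdn 2 m)%N by rewrite dvdn_gcd !order_dvdn y2 ym.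
  move: om; rewrite -coprime2n /coprime => /eqP ->; rewrite dvdn1 order_eq1 => /eqP y1.
  by move: ny1; rewrite y1 inE eqxx.
split; first exact: part1.
split.
- by split; [exact: P1P2 | exact: P2P1].
- by split; [move=> /P2P1; exact: P1P3 | move=> /P3P1 /P1P2].
- by split; [exact: P1P3 | exact: P3P1].
Qed.
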